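(* Let $\mathcal{M}=(E,\mathcal{C}^* )$ be a uniform oriented matroid of rank $r\ge 2$ and let $T$ be a tope of $\mathcal{M}$. Let $\mathcal{C}_T=\{X\in\mathcal{C}^*: X< T\}$ and $\mathcal{A}=\{X^0: X\in\mathcal{C}_T\}$. Then $\mathcal{A}$ is a $d$-dimensional abstract polytope on the ground set $E$, where $d=r-1$. Moreover, the graph $G(T)$ of $T$ is isomorphic to the graph $G_{abs}(\mathcal{A})$ of $\mathcal{A}$ (via $X\mapsto X^0$).
   Context: Sign vectors: for a finite set $E$ and $X\in\{+,-,0\}^E$, write $X^+=\{e:X_e=+\}$, $X^-=\{e:X_e=-\}$, $X^0=\{e:X_e=0\}$, $\operatorname{supp}(X)=X^+\cup X^-$, and $-X$ for the componentwise negation. For sign vectors $X,Y$, the separating set is $S(X,Y)=(X^+\cap Y^-)\cup(X^-\cap Y^+)$, and the composition $X\circ Y$ is given by $(X\circ Y)_e=X_e$ if $X_e\neq 0$ and $(X\circ Y)_e=Y_e$ otherwise. An oriented matroid $\mathcal{M}=(E,\mathcal{C}^* )$ is a finite set $E$ together with a set $\mathcal{C}^*\subseteq\{+,-,0\}^E$ of (signed) cocircuits satisfying: (CC0) $\mathbf{0}\notin\mathcal{C}^*$; (CC1) $X\in\mathcal{C}^*\Rightarrow -X\in\mathcal{C}^*$; (CC2) if $X,Y\in\mathcal{C}^*$ and $\operatorname{supp}(X)\subseteq\operatorname{supp}(Y)$ then $X=\pm Y$; (CC3) if $X,Y\in\mathcal{C}^*$, $X\neq -Y$ and $e\in S(X,Y)$,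 then there is $Z\in\mathcal{C}^*$ with $Z^+\subseteq (X^+\cup Y^+)\setminus\{e\}$ and $Z^-\subseteq (X^-\cup Y^-)\setminus\{e\}$. The covectors of $\mathcal{M}$ are $\mathbf{0}$ together with all compositions $X^1\circ\cdots\circ X^k$ ($k\ge 1$) of cocircuits, partially ordered componentwise by $0<+$ and $0<-$ ($+,-$ incomparable); $X<T$ refers to this order. The rank $r$ of $\mathcal{M}$ is the largest $k$ such that there is a chain $\mathbf{0}=V_0<V_1<\cdots<V_k$ of covectors. $\mathcal{M}$ is uniform if $|X^0|=r-1$ for every cocircuit $X$. A tope is a covector that is maximal in this order. The cocircuit graph $G^*(\mathcal{M})$ has the cocircuits as vertices, with distinct cocircuits $X,Y$ adjacent iff $|X^0\cap Y^0|\ge r-2$ and $S(X,Y)=\emptyset$. The graph $G(T)$ of a tope $T$ is the subgraph of $G^*(\mathcal{M})$ induced by the cocircuits $X$ with $X<T$. Abstract polytope: for a finite set $T_0$, a family $\mathcal{A}$ of subsets of $T_0$ (called vertices) is a $d$-dimensional abstract polytope on ground set $T_0$ if (i) every vertex has cardinality $d$; (ii) every $(d-1)$-element subset of $T_0$ is contained in either no vertex or exactly two vertices (these two are called adjacent); (iii) for any two distinct vertices $X,Y\in\mathcal{A}$ there is a sequence $X=Z_0,Z_1,\dots,Z_k=Y$ of vertices with $Z_i,Z_{i+1}$ adjacent for all $i$ and $X\cap Y\subseteq Z_i$ for all $i$. The graph $G_{abs}(\mathcal{A})$ has vertex set $\mathcal{A}$ and edges between adjacent vertices as in (ii). *)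

(* Defs.v *)
(* Sign vectors over a finite ground set E are encoded as
   finite functions E -> option bool:  None = 0,  Some true = +,  Some false = -. *)
From mathcomp Require Import all_boot.
Set Implicit Arguments. Unset Strict Implicit. Unset Printing Implicit Defensive.

Definition svec (E : finType) := {ffun E -> option bool}.

Section SignVectors.
Variable E : finType.
Implicit Types X Y Z V T : svec E.

Definition zerov : svec E := [ffun _ => None].
Definition posv X : {set E} := [set e | X e == Some true].
Definition negset X : {set E} := [set e | X e == Some false].
Definition zerset X : {set E} := [set e | X e == None].
Definition supp X : {set E} := posv X :|: negset X.
Definition oppv X : svec E := [ffun e => omap negb (X e)].
Definition sepset X Y : {set E} :=
  (posv X :&: negset Y) :|: (negset X :&: posv Y).
Definition compv X Y : svec E :=
  [ffun e => if X e is Some b then Some b else Y e].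

Definition sle X Y : bool := [forall e, (X e == None) || (X e == Y e)].
Definition slt X Y : bool := sle X Y && (X != Y).

Definition is_OM (C : {set svec E}) : Prop :=
  [/\ zerov \notin C,
      (forall X, X \in C -> oppv X \in C),
      (forall X Y, X \in C -> Y \in C -> supp X \subset supp Y ->
         X = Y \/ X = oppv Y)
    & (forall X Y e, X \in C -> Y \in C -> X <> oppv Y -> e \in sepset X Y ->
         exists2 Z, Z \in C &
           (posv Z \subset (posv X :|: posv Y) :\ e) /\
           (negset Z \subset (negset X :|: negset Y) :\ e))].

Definition covector (C : {set svec E}) V : Prop :=
  exists s : seq (svec E), all (fun X => X \in C) s /\ V = foldr compv zerov s.

Definition has_chain (C : {set svec E}) (k : nat) : Prop :=
  exists W : nat -> svec E,
    [/\ W 0 = zerov,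
        (forall i, i <= k -> covector C (W i))
      & (forall i, i < k -> slt (W i) (W i.+1))].

Definition is_rank (C : {set svec E}) (r : nat) : Prop :=
  has_chain C r /\ (forall k, has_chain C k -> k <= r).

Definition uniform (C : {set svec E}) (r : nat) : Prop :=
  forall X, X \in C -> #|zerset X| = r - 1.

Definition is_tope (C : {set svec E}) T : Prop :=
  covector C T /\ ~ (exists V, covector C V /\ slt T V).

Definition cocirc_adj (r : nat) X Y : bool :=
  [&& X != Y, r - 2 <= #|zerset X :&: zerset Y| & sepset X Y == set0].

Definition abs_adj (A : {set {set E}}) (d : nat) (P Q : {set E}) : bool :=
  [&& P \in A, Q \in A, P != Q &
      [exists S : {set E}, [&& #|S| == d.-1, S \subset P & S \subset Q]]].

Definition abstract_polytope (A : {set {set E}}) (d : nat) : Prop :=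
  [/\ (forall P, P \in A -> #|P| = d),
      (forall S : {set E}, #|S| = d.-1 ->
         #|[set P in A | S \subset P]| = 0 \/ #|[set P in A | S \subset P]| = 2)
    & (forall P Q, P \in A -> Q \in A -> P != Q ->
         exists s : seq {set E},
           [/\ path (abs_adj A d) P s, last P s = Q &
               all (fun Z : {set E} => P :&: Q \subset Z) (P :: s)])].

End SignVectors.

(* Main.v *)
Require Import Defs.
From mathcomp Require Import all_boot zify.
Set Implicit Arguments. Unset Strict Implicit. Unset Printing Implicit Defensive.

Lemma zsE (E : finType) (X : svec E) e : (e \in zerset X) = (X e == None).
Proof. by rewrite inE. Qed.

Lemma zs_opp E (X : svec E) : zerset (oppv X) = zerset X.
Proof. by apply/setP=> e; rewrite !inE ffunE; case: (X e). Qed.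

Lemma oppvK E (X : svec E) : oppv (oppv X) = X.
Proof. by apply/ffunP=> e; rewrite !ffunE; case: (X e) => [[]|]. Qed.

Lemma oppvE E (X : svec E) e : oppv X e = omap negb (X e).
Proof. by rewrite ffunE. Qed.

Definition elim_ax E (C : {set svec E}) := forall X Y e, X \in C -> Y \in C ->
  X <> oppv Y -> e \in sepset X Y ->
  exists2 Z, Z \in C & (posv Z \subset (posv X :|: posv Y) :\ e) /\
                       (negset Z \subset (negset X :|: negset Y) :\ e).

Lemma elim2 E (C : {set svec E}) X Y e b : elim_ax C -> X \in C -> Y \in C ->
  X <> oppv Y -> X e = Some b -> Y e = Some (~~ b) ->
  exists2 Z, Z \in C & Z e = None /\
    (forall g c, Z g = Some c -> X g = Some c \/ Y g = Some c).
Proof.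
move=> el XC YC nXY Xe Ye.
have : e \in sepset X Y by rewrite !inE Xe Ye; case: b {Xe Ye}.
case/(el _ _ _ XC YC nXY) => Z ZC [sp sn]; exists Z => //; split.
- case Ze: (Z e) => [[]|] //.
  + have : e \in posv Z by rewrite inE Ze.
    by move/(subsetP sp); rewrite !inE eqxx.
  + have : e \in negset Z by rewrite inE Ze.
    by move/(subsetP sn); rewrite !inE eqxx.
- move=> g [] Zg.
  + have : g \in posv Z by rewrite inE Zg.
    by move/(subsetP sp); rewrite !inE => /andP[_ /orP[]] /eqP ->; [left|right].
  + have : g \in negset Z by rewrite inE Zg.
    by move/(subsetP sn); rewrite !inE => /andP[_ /orP[]] /eqP ->; [left|right].
Qed.

Lemma elim_zs E (X Y Z : svec E) :
  (forall g c, Z g = Some c -> X g = Some c \/ Y g = Some c) ->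
  zerset X :&: zerset Y \subset zerset Z.
Proof.
move=> h; apply/subsetP=> g; rewrite !inE => /andP[/eqP Xg /eqP Yg].
by case Zg: (Z g) => [c|] //; case: (h _ _ Zg); rewrite ?Xg ?Yg.
Qed.

Lemma foldr_None E (s : seq (svec E)) e :
  ((foldr (@compv E) (zerov E) s) e == None) = all (fun X : svec E => X e == None) s.
Proof.
elim: s => [|X s IH] /=; first by rewrite ffunE.
by rewrite ffunE; case: (X e).
Qed.

Lemma sleP E (X Y : svec E) : sle X Y -> forall e, X e = None \/ X e = Y e.
Proof. by move/forallP=> h e; case/orP: (h e) => /eqP; [left|right]. Qed.

Lemma slt_proper E (V W : svec E) : slt V W -> zerset W \proper zerset V.
Proof.
case/andP=> /sleP h neq; rewrite properE; apply/andP; split.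
  apply/subsetP=> g; rewrite !inE => /eqP Wg.
  by case: (h g) => ->; rewrite ?Wg.
apply/negP=> sub; case/negP: neq; apply/eqP/ffunP=> g.
case Vg: (V g) => [b|].
  by case: (h g); rewrite Vg.
have : g \in zerset V by rewrite inE Vg.
by move/(subsetP sub); rewrite inE => /eqP ->.
Qed.

Lemma covec_L E (C : {set svec E}) (L : {set E}) V :
  (forall X, X \in C -> L \subset zerset X) -> covector C V -> L \subset zerset V.
Proof.
move=> hC [s [hs ->]]; apply/subsetP=> e eL; rewrite inE foldr_None.
apply/allP=> X Xs; have := subsetP (hC X (allP hs X Xs)) e eL; by rewrite inE.
Qed.

Lemma covec_sub E (C : {set svec E}) V :
  covector C V -> V != zerov E -> exists2 Y, Y \in C & zerset V \subset zerset Y.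
Proof.
move=> [[|Y s] [hs ->]]; first by rewrite eqxx.
move=> _; exists Y; first by case/andP: hs.
by apply/subsetP=> e; rewrite !inE foldr_None /= => /andP[].
Qed.

Lemma covec_restr E (C : {set svec E}) V z :
  covector C V -> V z = None -> covector [set X in C | X z == None] V.
Proof.
move=> [s [hs ->]] Vz; exists s; split=> //.
have := foldr_None s z; rewrite Vz eqxx => /esym hz.
by apply/allP=> X Xs; rewrite inE (allP hs X Xs) (allP hz X Xs).
Qed.


Lemma chain_card E (C : {set svec E}) (L : {set E}) m (W : nat -> svec E) k :
  (forall X, X \in C -> L \subset zerset X /\ #|zerset X| = #|L| + m) ->
  W 0 = zerov E -> (forall i, i <= k -> covector C (W i)) ->
  (forall i, i < k -> slt (W i) (W i.+1)) ->
  forall i, 0 < i <= k -> #|zerset (W i)| + i <= #|L| + m + 1.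
Proof.
move=> hC W0 Wc Wl; elim=> [//|[|i] IH] /andP[_ hi].
  have W1 : W 1 != zerov E by have := Wl 0 hi; rewrite W0 => /andP[_]; rewrite eq_sym.
  have [Y YC sub] := covec_sub (Wc 1 hi) W1.
  have := subset_leq_card sub; case: (hC Y YC) => _ ->; timeout 20 lia.
have := IH (ltnW hi); have := proper_card (slt_proper (Wl _ hi)); timeout 20 lia.
Qed.

Lemma chain_mono E (W : nat -> svec E) k :
  (forall i, i < k -> slt (W i) (W i.+1)) ->
  forall i j, i <= j -> j <= k -> zerset (W j) \subset zerset (W i).
Proof.
move=> Wl i; elim=> [|j IH] ij jk.
  have -> : i = 0 by lia.
  exact: subxx.
case: (leqP i j) => [lij|lji].
  apply: subset_trans (IH lij (ltnW jk)).
  exact: proper_sub (slt_proper (Wl _ jk)).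
have -> : i = j.+1 by lia.
exact: subxx.
Qed.

Lemma restr_elim E (C : {set svec E}) z :
  elim_ax C -> elim_ax [set X in C | X z == None].
Proof.
move=> el X Y e; rewrite [X \in _]inE [Y \in _]inE => /andP[XC /eqP Xz] /andP[YC /eqP Yz] nXY eS.
have [Z ZC [sp sn]] := el _ _ _ XC YC nXY eS.
exists Z => //; rewrite inE ZC /=.
case Zz: (Z z) => [[]|] //.
  have : z \in posv Z by rewrite inE Zz.
  by move/(subsetP sp); rewrite !inE Xz Yz andbF.
have : z \in negset Z by rewrite inE Zz.
by move/(subsetP sn); rewrite !inE Xz Yz andbF.
Qed.

Lemma hyp_all E (m : nat) : forall (C : {set svec E}) (L : {set E}),
  (forall X, X \in C -> oppv X \in C) -> elim_ax C ->
  (forall X, X \in C -> L \subset zerset X /\ #|zerset X| = #|L| + m) ->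
  has_chain C m.+1 ->
  forall H : {set E}, L \subset H -> #|H| = #|L| + m ->
  exists2 X, X \in C & zerset X = H.
Proof.
elim: m => [|m IH] C L Copp el hC [W [W0 Wc Wl]] H LH cH.
  have W1 : W 1 != zerov E by have := Wl 0 isT; rewrite W0 => /andP[_]; rewrite eq_sym.
  have [Y YC sub] := covec_sub (Wc 1 isT) W1.
  exists Y => //; case: (hC Y YC) => LY cY.
  have e1 : L == zerset Y by rewrite eqEcard LY cY addn0 leqnn.
  have e2 : L == H by rewrite eqEcard LH cH addn0 leqnn.
  by rewrite -(eqP e1) (eqP e2).
have cc := chain_card hC W0 Wc Wl.
have LW : forall i, i <= m.+2 -> L \subset zerset (W i).
  by move=> i hi; apply: covec_L (Wc i hi) => X /hC [].
have Wtop : zerset (W m.+2) = L.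
  apply/eqP; rewrite eq_sym eqEcard LW //; have := cc m.+2 (leqnn _); timeout 20 lia.
move/properP: (slt_proper (Wl _ (ltnSn m.+1))) => [_ [z zW zL]].
rewrite Wtop in zL.
set C' := [set X in C | X z == None].
have Wz : forall i, i <= m.+1 -> W i z = None.
  move=> i hi; have := subsetP (chain_mono Wl hi (ltnW (ltnSn _))) z zW.
  by rewrite inE => /eqP.
have hypC : forall H : {set E}, z |: L \subset H -> #|H| = #|z |: L| + m ->
    exists2 X, X \in C' & zerset X = H.
  apply: IH.
  - move=> X; rewrite !inE => /andP[XC /eqP Xz].
    by rewrite Copp //= ffunE Xz.
  - exact: restr_elim.
  - move=> X; rewrite inE => /andP[XC Xz]; case: (hC X XC) => LX cX.
    split; first by rewrite subUset sub1set inE Xz LX.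
    by rewrite cX cardsU1 zL; timeout 20 lia.
  - exists W; split=> //.
      by move=> i hi; apply: covec_restr (Wc _ (leqW hi)) (Wz _ hi).
    by move=> i hi; apply: Wl; timeout 20 lia.
have [s [hs Wse]] := Wc m.+2 (leqnn _).
have : ~~ all (fun X : svec E => X z == None) s.
  by rewrite -foldr_None -Wse -zsE Wtop zL.
case/allPn=> X0 X0s X0z.
have X0C : X0 \in C by exact: (allP hs X0 X0s).
set H0 := zerset X0.
have zH0 : z \notin H0 by rewrite zsE.
have [LH0 cH0] := hC X0 X0C.
have main : forall k (H : {set E}), L \subset H -> #|H| = #|L| + m.+1 -> z \notin H ->
    #|H :\: H0| <= k -> exists2 X, X \in C & zerset X = H.
  elim=> [|k IHk] H' LH' cH' zH' hk.
    exists X0 => //; apply/eqP; rewrite eq_sym eqEcard cH' cH0 leqnn andbT.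
    by rewrite -setD_eq0 -cards_eq0 -leqn0.
  case: (boolP (H' \subset H0)) => [sub|].
    exists X0 => //; apply/eqP; rewrite eq_sym eqEcard cH' cH0 leqnn andbT //.
  case/subsetPn=> y yH yH0.
  have [w wH0 wH] : exists2 w, w \in H0 & w \notin H'.
    apply/subsetPn/negP=> sub; move/negP: yH0; apply.
    have e : H0 == H' by rewrite eqEcard sub cH' cH0 leqnn.
    by rewrite (eqP e).
  have yL : y \notin L by apply/negP=> /(subsetP LH0); rewrite (negbTE yH0).
  set H2 := w |: (H' :\ y).
  have zH2 : z \notin H2.
    rewrite !inE negb_or negb_and zH' orbT andbT.
    by apply/eqP=> ezw; rewrite ezw wH0 in zH0.
  have [X2 X2C zX2] : exists2 X, X \in C & zerset X = H2.
    apply: IHk.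
    - apply/subsetP=> x xL; rewrite !inE (subsetP LH' x xL) andbT.
      by apply/orP; right; apply/eqP=> exy; rewrite -exy xL in yL.
    - rewrite cardsU1 !inE negb_and wH orbT /= -cH' (cardsD1 y H') yH; by [].
    - exact: zH2.
    - have sub : H2 :\: H0 \subset (H' :\: H0) :\ y.
        apply/subsetP=> x; rewrite !in_setD !in_setU1 !in_setD1.
        case/andP=> xH0 /orP[/eqP exw|/andP[xy xH]].
          by rewrite exw wH0 in xH0.
        by rewrite in_set1 xy xH xH0.
      have := subset_leq_card sub; have := cardsD1 y (H' :\: H0).
      rewrite in_setD yH yH0 /=.
      move: hk; clear; move=> ha hb hc; timeout 20 lia.
  set H1 := z |: (H' :\ y).
  have [X1 X1C zX1] : exists2 X, X \in C' & zerset X = H1.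
    apply: hypC.
    - rewrite setUSS //; apply/subsetP=> x xL; rewrite !inE (subsetP LH' x xL) andbT.
      by apply/eqP=> exy; rewrite -exy xL in yL.
    - have h1 := cardsD1 y H'; rewrite yH /= in h1.
      rewrite !cardsU1 zL in_setD1 (negbTE zH') andbF /=.
      move: h1 cH'; clear; move=> h1 h2; timeout 20 lia.
  have X1C' : X1 \in C by move: X1C; rewrite inE => /andP[].
  have yH1 : y \notin H1.
    rewrite in_setU1 in_setD1 eqxx /= orbF; apply/eqP=> eyz; rewrite -eyz yH in zH'; done.
  have yH2 : y \notin H2 by rewrite in_setU1 in_setD1 eqxx /= orbF; apply/eqP=> eyw; rewrite eyw wH0 in yH0.
  case X1y : (X1 y) => [b1|]; last by move: yH1; rewrite -zX1 zsE X1y.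
  case X2y : (X2 y) => [b2|]; last by move: yH2; rewrite -zX2 zsE X2y.
  set X1' := if b1 == ~~ b2 then X1 else oppv X1.
  have X1'C : X1' \in C by rewrite /X1'; case: ifP => _ //; exact: Copp.
  have zX1' : zerset X1' = H1 by rewrite /X1'; case: ifP => _ //; rewrite zs_opp.
  have X1'y : X1' y = Some (~~ b2).
    rewrite /X1'; case: ifP => [/eqP <-|] //.
    by rewrite ffunE X1y /= => /negbT; case: (b1); case: (b2).
  have nX : X2 <> oppv X1'.
    move=> e; have : z \in zerset X2 by rewrite e zs_opp zX1' !inE eqxx.
    by rewrite zX2 (negbTE zH2).
  have [Z ZC [Zy hZ]] := elim2 el X2C X1'C nX X2y X1'y.
  exists Z => //.
  have sub : H' \subset zerset Z.
    apply/subsetP=> x xH; case: (eqVneq x y) => [->|xy]; first by rewrite zsE Zy.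
    apply: (subsetP (elim_zs hZ)).
    by rewrite in_setI zX2 zX1' !in_setU1 !in_setD1 xy xH !orbT.
  have [_ cZ] := hC Z ZC; apply/eqP; by rewrite eq_sym eqEcard sub cZ cH' leqnn.
case: (boolP (z \in H)) => zH.
  have LzH : z |: L \subset H by rewrite subUset sub1set zH LH.
  have czH : #|H| = #|z |: L| + m by rewrite cardsU1 zL /= add1n addSn cH addnS.
  have [X XC' zX] := hypC H LzH czH.
  by exists X => //; move: XC'; rewrite inE => /andP[].
exact: (main #|H :\: H0| H LH cH zH (leqnn _)).
Qed.


Record setting E (C : {set svec E}) (m : nat) (T : svec E) : Prop := Setting {
  s_opp : forall X, X \in C -> oppv X \in C;
  s_el : elim_ax C;
  s_cc2 : forall X Y, X \in C -> Y \in C -> supp X \subset supp Y ->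
         X = Y \/ X = oppv Y;
  s_card : forall X, X \in C -> #|zerset X| = m;
  s_hyp : forall H : {set E}, #|H| = m -> exists2 X, X \in C & zerset X = H;
  s_full : forall e, T e != None;
  s_m : 0 < m }.

Definition Vt E (C : {set svec E}) (T : svec E) (D L : {set E}) : {set svec E} :=
  [set X in C | [&& L \subset zerset X, zerset X :&: D == set0 &
     [forall f, (f \in D) || (X f == None) || (X f == T f)]]].

Definition adjV E (V : {set svec E}) (m : nat) : rel (svec E) :=
  fun X Y => [&& X \in V, Y \in V, X != Y & #|zerset X :&: zerset Y| == m.-1].

Lemma adjV_sym E (V : {set svec E}) m : symmetric (adjV V m).
Proof.
by move=> X Y; rewrite /adjV setIC eq_sym; case: (X \in V); case: (Y \in V).
Qed.

Lemma VtP E (C : {set svec E}) (T : svec E) (D L : {set E}) (X : svec E) : X \in Vt C T D L ->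
  [/\ X \in C, L \subset zerset X, zerset X :&: D = set0 &
      forall f, f \notin D -> X f = None \/ X f = T f].
Proof.
rewrite inE => /and4P[XC LX /eqP XD /forallP h]; split=> // f fD.
by move: (h f); rewrite (negbTE fD) /= => /orP[] /eqP; [left|right].
Qed.

Lemma VtI E (C : {set svec E}) (T : svec E) (D L : {set E}) (X : svec E) : X \in C -> L \subset zerset X ->
  zerset X :&: D = set0 -> (forall f, f \notin D -> X f = None \/ X f = T f) ->
  X \in Vt C T D L.
Proof.
move=> XC LX XD h; rewrite inE XC LX XD eqxx /=; apply/forallP=> f.
case: (boolP (f \in D)) => //= fD; by case: (h f fD) => ->; rewrite eqxx ?orbT.
Qed.

Lemma supp_zs E (X : svec E) : supp X = ~: zerset X.
Proof. by apply/setP=> e; rewrite !inE; case: (X e) => [[]|]. Qed.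

Lemma exists_out E (D A : {set E}) m : m < #|~: D| -> #|A| = m ->
  exists2 f, f \notin D & f \notin A.
Proof.
move=> hD hA; have : ~~ (~: D \subset A).
  by apply/negP=> sub; have := subset_leq_card sub; rewrite hA; lia.
by case/subsetPn=> f; rewrite inE => fD fA; exists f.
Qed.

Lemma adj_of E (X Y : svec E) (S : {set E}) m :
  #|zerset X| = m -> #|zerset Y| = m -> S \subset zerset X -> S \subset zerset Y ->
  #|S| = m.-1 -> zerset X != zerset Y -> #|zerset X :&: zerset Y| = m.-1.
Proof.
move=> cX cY SX SY cS neq.
have h1 : #|S| <= #|zerset X :&: zerset Y| by apply: subset_leq_card; rewrite subsetI SX SY.
have h3 : #|zerset X :&: zerset Y| <= m by rewrite -cX subset_leq_card ?subsetIl.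
have h4 : #|zerset X :&: zerset Y| != m.
  apply/eqP=> e; case/negP: neq.
  have e1 : zerset X :&: zerset Y == zerset X by rewrite eqEcard subsetIl e cX leqnn.
  have e2 : zerset X :&: zerset Y == zerset Y by rewrite eqEcard subsetIr e cY leqnn.
  by apply/eqP; rewrite -(eqP e1); exact: (eqP e2).
lia.
Qed.

Lemma sameV E (C : {set svec E}) m (T : svec E) (D L : {set E}) (X Y : svec E) : setting C m T ->
  X \in Vt C T D L -> Y \in Vt C T D L -> m < #|~: D| ->
  zerset X = zerset Y -> X = Y.
Proof.
case=> Copp el cc2 hC hyp Tf m0 XV YV hD eXY.
have [XC LX XD hX] := VtP XV; have [YC LY YD hY] := VtP YV.
case: (cc2 X Y XC YC); first by rewrite !supp_zs eXY.
  by [].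
move=> eopp; have [f fD fX] := exists_out hD (hC X XC).
have fY : f \notin zerset Y by rewrite -eXY.
case: (hX f fD) => [|Xf]; first by move/eqP; rewrite -zsE (negbTE fX).
case: (hY f fD) => [|Yf]; first by move/eqP; rewrite -zsE (negbTE fY).
move: (Tf f); rewrite eopp ffunE Yf in Xf.
by case: (T f) Xf => [[]|].
Qed.


Lemma notNone (o : option bool) : o != None -> exists b, o = Some b.
Proof. by case: o => [b|] // _; exists b. Qed.

Lemma edge E (C : {set svec E}) m (T : svec E) (D L : {set E}) (X : svec E) a :
  setting C m T -> X \in Vt C T D L -> a \in zerset X -> a \notin L -> m < #|~: D| ->
  exists2 Y, Y \in Vt C T D L & (Y != X) && (zerset X :\ a \subset zerset Y).
Proof.
move=> hS XV aX aL hD; case: (hS) => Copp el cc2 hC hyp Tf m0.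
have [XC LX XD hX] := VtP XV.
set S := zerset X :\ a.
have cS : #|S| = m.-1.
  have := cardsD1 a (zerset X); rewrite aX hC // => ->; by [].
have SX : S \subset zerset X by apply: subD1set.
have aS : a \notin S by rewrite !inE eqxx.
set dis := fun Y : svec E => [set f | [&& f \notin D, Y f != None & Y f != T f]].
have fin : forall Y, Y \in C -> forall b, b \notin D -> b \notin zerset X ->
    zerset Y = b |: S -> Y a = T a -> dis Y = set0 ->
    exists2 Y, Y \in Vt C T D L & (Y != X) && (S \subset zerset Y).
  move=> Y YC b bD bX zY Ya d0; exists Y.
    apply: VtI => //.
    - apply/subsetP=> x xL; rewrite zY in_setU1 in_setD1 (subsetP LX x xL) andbT.
      by apply/orP; right; apply/eqP=> exa; rewrite -exa xL in aL.
    - apply/setP=> x; rewrite in_setI in_set0 zY in_setU1; apply/negP=> /andP[/orP[/eqP exb|xS] xD].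
        by rewrite -exb xD in bD.
      have : x \in zerset X :&: D by rewrite in_setI (subsetP SX x xS) xD.
      by rewrite XD in_set0.
    - move=> f fD; case Yf: (Y f) => [c|]; [right|by left].
      have : f \notin dis Y by rewrite d0 in_set0.
      by rewrite inE fD Yf /= negbK => /eqP.
  rewrite zY subsetUr andbT; apply/eqP=> eYX.
  by move: (Tf a); rewrite -Ya eYX -zsE aX.
have key : forall n Y, Y \in C -> forall b, b \notin D -> b \notin zerset X ->
    zerset Y = b |: S -> Y a = T a -> #|dis Y| <= n ->
    exists2 Y, Y \in Vt C T D L & (Y != X) && (S \subset zerset Y).
  elim=> [|n IH] Y YC b bD bX zY Ya hn.
    by apply: (fin Y YC b) => //; apply/eqP; rewrite -cards_eq0 -leqn0.
  case: (set_0Vmem (dis Y)) => [d0|[f fdis]]; first exact: (fin Y YC b).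
  move: (fdis); rewrite inE => /and3P[fD /notNone [c Yf] Yft].
  have [t Tft] := notNone (Tf f).
  have ct : c = ~~ t by move: Yft; rewrite Yf Tft; case: c t {Yf Tft fdis} => [] [].
  have fX : f \notin zerset X.
    apply/negP=> fX; case: (eqVneq f a) => [efa|nfa].
      by move: Yft; rewrite efa Ya eqxx.
    have : f \in zerset Y by rewrite zY in_setU1 in_setD1 nfa fX orbT.
    by rewrite zsE Yf.
  have Xf : X f = Some t.
    by case: (hX f fD) => [Xf|->//]; move: fX; rewrite zsE Xf.
  have nXY : X <> oppv Y.
    move=> eXY; move: (Tf a); rewrite -Ya.
    by have := aX; rewrite eXY zs_opp zsE => /eqP ->.
  rewrite ct in Yf.
  have [Z ZC [Zf hZ]] := elim2 el XC YC nXY Xf Yf.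
  have fS : f \notin S by apply/negP=> /(subsetP SX); rewrite (negbTE fX).
  have zZ : zerset Z = f |: S.
    apply/eqP; rewrite eq_sym eqEcard hC // cardsU1 fS cS.
    rewrite andbC /=; apply/andP; split; first by case: (m) m0.
    rewrite subUset sub1set zsE Zf eqxx /=.
    apply: subset_trans (elim_zs hZ); rewrite subsetI SX zY; exact: subsetUr.
  have Za : Z a = T a.
    have aZ : a \notin zerset Z.
      rewrite zZ in_setU1 (negbTE aS) orbF; apply/eqP=> eaf; by rewrite -eaf aX in fX.
    move: aZ; rewrite zsE; case Za: (Z a) => [c'|] // _.
    case: (hZ _ _ Za) => [Xa|<- //]; by move: aX; rewrite zsE Xa.
  have sub : dis Z \subset dis Y :\ f.
    apply/subsetP=> g; rewrite inE => /and3P[gD /notNone [c' Zg] Zgt].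
    rewrite in_setD1 inE gD /=.
    case: (hZ _ _ Zg) => [Xg|Yg].
      by case: (hX g gD); rewrite Xg // => e; move: Zgt; rewrite Zg -e eqxx.
    rewrite Yg -Zg Zgt Zg /= !andbT; apply/eqP=> egf; move: Zg; by rewrite egf Zf.
  apply: (IH Z ZC f fD fX zZ Za).
  have := subset_leq_card sub; have := cardsD1 f (dis Y); rewrite fdis.
  move: hn; clear; move=> h1 h2 h3; lia.
have [b bD bX] := exists_out hD (hC X XC).
have cH : #|b |: S| = m.
  rewrite cardsU1 cS; have -> : b \notin S by apply/negP=> /(subsetP SX); rewrite (negbTE bX).
  by case: (m) m0.
have [Y0 Y0C zY0] := hyp _ cH.
have aY0 : a \notin zerset Y0.
  rewrite zY0 in_setU1 (negbTE aS) orbF; apply/eqP=> eab; by rewrite -eab aX in bX.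
move: aY0; rewrite zsE => /notNone [c0 Y0a].
have [ta Ta] := notNone (Tf a).
set Y := if c0 == ta then Y0 else oppv Y0.
have YC : Y \in C by rewrite /Y; case: ifP => _ //; exact: Copp.
have zY : zerset Y = b |: S by rewrite /Y; case: ifP => _ //; rewrite zs_opp.
have Ya : Y a = T a.
  rewrite /Y Ta; case: ifP => [/eqP <- //|]; rewrite ffunE Y0a /=.
  by case: (c0); case: (ta).
have [Y' Y'V /andP[nY' sY']] := key _ Y YC b bD bX zY Ya (leqnn _).
by exists Y' => //; rewrite nY'.
Qed.


Lemma inter_lt E (X Y : svec E) m : #|zerset X| = m -> #|zerset Y| = m ->
  zerset X != zerset Y -> #|zerset X :&: zerset Y| < m.
Proof.
move=> cX cY neq.
have h3 : #|zerset X :&: zerset Y| <= m by rewrite -cX subset_leq_card ?subsetIl.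
have h4 : #|zerset X :&: zerset Y| != m.
  apply/eqP=> e; case/negP: neq.
  have e1 : zerset X :&: zerset Y == zerset X by rewrite eqEcard subsetIl e cX leqnn.
  have e2 : zerset X :&: zerset Y == zerset Y by rewrite eqEcard subsetIr e cY leqnn.
  by apply/eqP; rewrite -(eqP e1); exact: (eqP e2).
lia.
Qed.

Lemma Vt_empty E (C : {set svec E}) m (T : svec E) (D L : {set E}) X :
  setting C m T -> m < #|~: D| -> ~: (D :|: L) = set0 -> X \notin Vt C T D L.
Proof.
move=> hS hD e0; apply/negP=> XV; have [XC LX XD hX] := VtP XV.
have sub : ~: D \subset zerset X.
  apply/subsetP=> x xD; apply: (subsetP LX); apply/negPn/negP=> xL.
  have : x \in ~: (D :|: L) by rewrite !inE negb_or -(in_setC x D) xD xL.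
  by rewrite e0 in_set0.
have := subset_leq_card sub; rewrite (s_card hS XC); lia.
Qed.

Lemma direct E (C : {set svec E}) m (T : svec E) (D L : {set E}) X Y :
  setting C m T -> #|~: D| = m.+1 -> X \in Vt C T D L -> Y \in Vt C T D L ->
  connect (adjV (Vt C T D L) m) X Y.
Proof.
move=> hS hD XV YV; case: (eqVneq X Y) => [->|nXY]; first exact: connect0.
apply: connect1; rewrite /adjV XV YV nXY /=.
have [XC LX XD hX] := VtP XV; have [YC LY YD hY] := VtP YV.
have cX := s_card hS XC; have cY := s_card hS YC.
have nz : zerset X != zerset Y.
  by apply/eqP=> e; case/eqP: nXY; apply: (sameV hS XV YV) => //; rewrite hD.
have lt := inter_lt cX cY nz.
have sub : zerset X :|: zerset Y \subset ~: D.
  apply/subsetP=> x; rewrite in_setU in_setC => /orP[] xZ; apply/negP=> xD.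
    have : x \in zerset X :&: D by rewrite in_setI xZ xD.
    by rewrite XD in_set0.
  have : x \in zerset Y :&: D by rewrite in_setI xZ xD.
  by rewrite YD in_set0.
have := subset_leq_card sub; have := cardsUI (zerset X) (zerset Y).
rewrite cX cY hD; move: lt; clear; move=> h1 h2 h3; apply/eqP; lia.
Qed.

Lemma conn E (C : {set svec E}) m (T : svec E) : setting C m T ->
  forall n (D L : {set E}), #|~: (D :|: L)| <= n -> m < #|~: D| ->
  forall X Y, X \in Vt C T D L -> Y \in Vt C T D L ->
  connect (adjV (Vt C T D L) m) X Y.
Proof.
move=> hS; have [Copp el cc2 hC hyp Tf m0] := hS.
elim=> [|n IH] D L hn hD X Y XV YV.
  have e0 : ~: (D :|: L) = set0 by apply/eqP; rewrite -cards_eq0 -leqn0.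
  by rewrite (negbTE (Vt_empty X hS hD e0)) in XV.
case: (eqVneq #|~: D| m.+1) => [hD1|hD1]; first exact: direct.
have hD2 : m.+1 < #|~: D| by rewrite ltn_neqAle eq_sym hD1.
case: (set_0Vmem (~: (D :|: L))) => [e0|[e eDL]].
  by rewrite (negbTE (Vt_empty X hS hD e0)) in XV.
move: (eDL); rewrite in_setC in_setU negb_or => /andP[eD eL].
set V := Vt C T D L.
set V' := Vt C T (e |: D) L.
set Q := Vt C T D (e |: L).
set R := adjV V m.
have Rsym : connect_sym R := sym_connect_sym (adjV_sym V m).
have hn' : #|~: ((e |: D) :|: L)| <= n.
  have sub : ~: ((e |: D) :|: L) \subset ~: (D :|: L) :\ e.
    apply/subsetP=> x; rewrite !inE !negb_or => /andP[/andP[xe xD] xL].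
    by rewrite xe xD xL.
  have := subset_leq_card sub; have := cardsD1 e (~: (D :|: L)); rewrite eDL.
  move: hn; clear; move=> h1 h2 h3; lia.
have hn'' : #|~: (D :|: (e |: L))| <= n.
  by rewrite setUA (setUC D [set e]).
have hDe : m < #|~: (e |: D)|.
  have -> : ~: (e |: D) = ~: D :\ e by apply/setP=> x; rewrite !inE negb_or.
  have := cardsD1 e (~: D); rewrite in_setC eD /=.
  move: hD2; clear; move=> h1 h2; lia.
have QV : forall W, W \in Q -> W \in V.
  move=> W WQ; have [WC LW WD hW] := VtP WQ; apply: VtI => //.
  by apply: subset_trans LW; exact: subsetUr.
have connQ : forall W1 W2, W1 \in Q -> W2 \in Q -> connect R W1 W2.
  move=> W1 W2 W1Q W2Q; apply: (connect_sub _ (IH D (e |: L) hn'' hD W1 W2 W1Q W2Q)).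
  move=> U1 U2 /and4P[U1Q U2Q nU cU]; apply: connect1.
  by rewrite /R /adjV (QV _ U1Q) (QV _ U2Q) nU cU.
have V'V : forall Z, Z \in V' -> Z e = T e -> Z \in V.
  move=> Z ZV' Ze; have [ZC LZ ZD hZ] := VtP ZV'; apply: VtI => //.
    apply/eqP; rewrite -subset0 -ZD; apply: setIS; exact: subsetUr.
  move=> f fD; case: (eqVneq f e) => [->|fe]; first by right.
  by apply: hZ; rewrite in_setU1 negb_or fe.
have VV' : forall Z, Z \in V -> e \notin zerset Z -> Z \in V' /\ Z e = T e.
  move=> Z ZV eZ; have [ZC LZ ZD hZ] := VtP ZV.
  have Ze : Z e = T e by case: (hZ e eD) => // Ze; move: eZ; rewrite zsE Ze.
  split=> //; apply: VtI => //.
    apply/setP=> x; rewrite in_setI in_setU1 in_set0.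
    case: (eqVneq x e) => [->|xe] /=; first by rewrite (negbTE eZ).
    apply/negP=> xx; have : x \in zerset Z :&: D by rewrite in_setI.
    by rewrite ZD in_set0.
  move=> f; rewrite in_setU1 negb_or => /andP[_ fD]; exact: hZ.
have cross : forall Z1 Z2, adjV V' m Z1 Z2 -> Z1 e = T e -> Z2 e != T e ->
    exists2 W, W \in Q & R Z1 W.
  move=> Z1 Z2 /and4P[Z1V' Z2V' nZ /eqP cZ] Z1e Z2e.
  have Z1V := V'V _ Z1V' Z1e.
  have [Z1C LZ1 Z1D hZ1] := VtP Z1V'; have [Z2C LZ2 Z2D hZ2] := VtP Z2V'.
  have eZ2 : e \notin zerset Z2.
    apply/negP=> eZ; have : e \in zerset Z2 :&: (e |: D) by rewrite in_setI eZ setU11.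
    by rewrite Z2D in_set0.
  have [t Tet] := notNone (Tf e).
  move: eZ2; rewrite zsE => /notNone [c Z2ec].
  have ct : c = ~~ t by move: Z2e; rewrite Z2ec Tet; case: (c); case: (t).
  rewrite ct in Z2ec; have Z1e' := Z1e; rewrite Tet in Z1e'.
  have nopp : Z1 <> oppv Z2.
    move=> eo; move: cZ; rewrite eo zs_opp setIid (hC _ Z2C) => h.
    by move: m0 h; clear; lia.
  have [W WC [We hW]] := elim2 el Z1C Z2C nopp Z1e' Z2ec.
  set I := zerset Z1 :&: zerset Z2.
  have eI : e \notin I by rewrite in_setI zsE Z1e'.
  have zW : zerset W = e |: I.
    apply/eqP; rewrite eq_sym eqEcard (hC _ WC) cardsU1 eI cZ.
    rewrite subUset sub1set zsE We eqxx (elim_zs hW) /=.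
    by move: m0; clear; case: m.
  have WQ : W \in Q.
    apply: VtI => //.
    - rewrite zW; apply: setUS; by rewrite subsetI LZ1 LZ2.
    - apply/setP=> x; rewrite in_setI zW in_setU1 in_set0.
      apply/negP=> /andP[/orP[/eqP xe|xI] xD]; first by rewrite -xe xD in eD.
      have : x \in zerset Z1 :&: (e |: D).
        by rewrite in_setI in_setU1 xD orbT andbT; move: xI; rewrite in_setI => /andP[].
      by rewrite Z1D in_set0.
    - move=> f fD; case Wf: (W f) => [c'|]; [right|by left].
      have fe : f != e by apply/eqP=> efe; move: Wf; rewrite efe We.
      have fD' : f \notin e |: D by rewrite in_setU1 negb_or fe.
      case: (hW _ _ Wf) => [Zf|Zf].
        by case: (hZ1 f fD') => h; rewrite Zf in h; [discriminate | rewrite h].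
      by case: (hZ2 f fD') => h; rewrite Zf in h; [discriminate | rewrite h].
  exists W => //; rewrite /R /adjV Z1V (QV _ WQ) /=.
  have nz : zerset Z1 != zerset W.
    apply/eqP=> ez; have : e \in zerset Z1 by rewrite ez zW setU11.
    by rewrite zsE Z1e'.
  rewrite (adj_of (hC _ Z1C) (hC _ WC) (subsetIl _ _) _ cZ nz) ?eqxx ?andbT.
    by apply/eqP=> eZW; case/eqP: nz; rewrite eZW.
  by rewrite zW; exact: subsetUr.
have lift : forall X0 p Z0, Z0 \in V' ->
    ((Z0 e = T e /\ connect R X0 Z0) \/ (exists2 W, W \in Q & connect R X0 W)) ->
    path (adjV V' m) Z0 p ->
    (((last Z0 p) e = T e /\ connect R X0 (last Z0 p)) \/
     (exists2 W, W \in Q & connect R X0 W)).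
  move=> X0; elim=> [|Z1 p IHp] Z0 Z0V' h //= /andP[a01 pth].
  have Z1V' : Z1 \in V' by case/and4P: a01.
  apply: (IHp Z1 Z1V') pth.
  case: h => [[Z0e c0]|]; last by right.
  case: (eqVneq (Z1 e) (T e)) => [Z1e|Z1e].
    left; split=> //; apply: (connect_trans c0); apply: connect1.
    case/and4P: a01 => _ _ n01 c01.
    by rewrite /R /adjV (V'V _ Z0V' Z0e) (V'V _ Z1V' Z1e) n01 c01.
  right; have [W WQ RW] := cross _ _ a01 Z0e Z1e; exists W => //.
  exact: (connect_trans c0 (connect1 RW)).
have toP : forall Z, Z \in V -> exists2 Z', (Z' \in V) && (e \notin zerset Z') & connect R Z Z'.
  move=> Z ZV; case: (boolP (e \in zerset Z)) => eZ; last first.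
    by exists Z; rewrite ?ZV ?eZ // connect0.
  have [Y2 Y2V /andP[nY2 sY2]] := edge hS ZV eZ eL hD.
  have [ZC _ _ _] := VtP ZV; have [Y2C _ _ _] := VtP Y2V.
  have nz : zerset Z != zerset Y2.
    apply/eqP=> ez; case/eqP: nY2; apply: (sameV hS Y2V ZV hD); by rewrite ez.
  have eY2 : e \notin zerset Y2.
    apply/negP=> eY; case/eqP: nz; apply/eqP; rewrite eqEcard (hC _ ZC) (hC _ Y2C) leqnn andbT.
    by rewrite -(setD1K eZ) subUset sub1set eY sY2.
  exists Y2; first by rewrite Y2V eY2.
  have nZY : Z != Y2 by rewrite eq_sym.
  apply: connect1; rewrite /R /adjV ZV Y2V nZY /=; apply/eqP.
  apply: (adj_of (hC _ ZC) (hC _ Y2C) (subD1set _ _) sY2 _ nz).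
  have := cardsD1 e (zerset Z); rewrite eZ (hC _ ZC) => ->; by [].
have PP : forall X' Y', X' \in V -> e \notin zerset X' -> Y' \in V -> e \notin zerset Y' ->
    connect R X' Y'.
  move=> X' Y' X'V eX Y'V eY.
  have [X'V' X'e] := VV' _ X'V eX; have [Y'V' Y'e] := VV' _ Y'V eY.
  have h1 := IH (e |: D) L hn' hDe X' Y' X'V' Y'V'.
  have h2 := IH (e |: D) L hn' hDe Y' X' Y'V' X'V'.
  case/connectP: h1 => p1 pth1 eY1.
  case: (lift X' p1 X' X'V' (or_introl (conj X'e (connect0 _ _))) pth1) => [[_]|[W WQ cW]].
    by rewrite -eY1.
  case/connectP: h2 => p2 pth2 eX2.
  case: (lift Y' p2 Y' Y'V' (or_introl (conj Y'e (connect0 _ _))) pth2) => [[_]|[W' W'Q cW']].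
    by rewrite -eX2 Rsym.
  apply: (connect_trans cW); apply: (connect_trans (connQ _ _ WQ W'Q)).
  by rewrite Rsym.
have [X' /andP[X'V eX'] cX] := toP X XV.
have [Y' /andP[Y'V eY'] cY] := toP Y YV.
apply: (connect_trans cX); apply: (connect_trans (PP _ _ X'V eX' Y'V eY')).
by rewrite Rsym.
Qed.


Lemma two_max E (C : {set svec E}) m (T : svec E) (S : {set E}) a b c X0 X1 X2 :
  setting C m T -> X0 \in Vt C T set0 set0 -> X1 \in Vt C T set0 set0 ->
  X2 \in Vt C T set0 set0 ->
  zerset X0 = a |: S -> zerset X1 = b |: S -> zerset X2 = c |: S ->
  a != b -> a \notin S -> b \notin S -> c \notin S -> (c == a) || (c == b).
Proof.
move=> hS X0V X1V X2V z0 z1 z2 ab aS bS cS; have [Copp el cc2 hC hyp Tf m0] := hS.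
have [X0C _ _ h0] := VtP X0V; have [X1C _ _ h1] := VtP X1V; have [X2C _ _ h2] := VtP X2V.
case: (eqVneq c a) => //= ca; case: (eqVneq c b) => //= cb; exfalso.
have nin : forall (X : svec E) x y, (forall f, f \notin set0 -> X f = None \/ X f = T f) ->
    zerset X = x |: S -> y != x -> y \notin S -> X y = T y.
  move=> X x y hX zX yx yS; case: (hX y (negbT (in_set0 y))) => // Xy.
  have : y \in zerset X by rewrite zsE Xy.
  by rewrite zX in_setU1 (negbTE yx) (negbTE yS).
have X0c := nin _ _ _ h0 z0 ca cS; have X1c := nin _ _ _ h1 z1 cb cS.
have [t Tc] := notNone (Tf c).
have X1'c : oppv X1 c = Some (~~ t) by rewrite ffunE X1c Tc.
rewrite Tc in X0c.
have nopp : X0 <> oppv (oppv X1).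
  rewrite oppvK => e01; have : a \in zerset X1 by rewrite -e01 z0 setU11.
  by rewrite z1 in_setU1 (negbTE ab) (negbTE aS).
have [Z ZC [Zc hZ]] := elim2 el X0C (Copp _ X1C) nopp X0c X1'c.
have zZ : zerset Z = zerset X2.
  apply/eqP; rewrite eq_sym eqEcard (hC _ ZC) (hC _ X2C) leqnn andbT z2.
  rewrite subUset sub1set zsE Zc eqxx /=; apply: subset_trans (elim_zs hZ).
  by rewrite subsetI z0 zs_opp z1 !subsetUr.
have notz : forall x, x != c -> x \notin S -> Z x != None.
  by move=> x xc xS; rewrite -zsE zZ z2 in_setU1 negb_or xc.
have ac : a != c by rewrite eq_sym.
have bc : b != c by rewrite eq_sym.
have ba : b != a by rewrite eq_sym.
have [za Za] := notNone (notz a ac aS).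
have [zb Zb] := notNone (notz b bc bS).
have X1a := nin _ _ _ h1 z1 ab aS; have X0b := nin _ _ _ h0 z0 ba bS.
have X2a := nin _ _ _ h2 z2 ac aS; have X2b := nin _ _ _ h2 z2 bc bS.
have X0a : X0 a = None by apply/eqP; rewrite -zsE z0 setU11.
have X1b : X1 b = None by apply/eqP; rewrite -zsE z1 setU11.
have Za' : Z a = omap negb (T a).
  rewrite Za; case: (hZ _ _ Za); first by rewrite X0a.
  by rewrite ffunE X1a => ->.
have Zb' : Z b = T b.
  rewrite Zb; case: (hZ _ _ Zb); first by rewrite X0b.
  by rewrite ffunE X1b.
have [ta Ta] := notNone (Tf a); have [tb Tb] := notNone (Tf b).
case: (cc2 Z X2 ZC X2C); first by rewrite !supp_zs zZ.
  move=> eZ; move: Za'; rewrite eZ X2a Ta /=; case: (ta) => //.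
move=> eZ; move: Zb'; rewrite eZ ffunE X2b Tb /=; case: (tb) => //.
Qed.


Lemma foldr_compv_pt E (s : seq (svec E)) X g :
  foldr (@compv E) X s g =
  if foldr (@compv E) (zerov E) s g is Some b then Some b else X g.
Proof.
elim: s => [|Y s IH] /=; first by rewrite ffunE.
by rewrite !ffunE IH; case: (Y g).
Qed.

Lemma CT_Vt E (C : {set svec E}) m (T : svec E) : setting C m T ->
  [set X in C | slt X T] = Vt C T set0 set0.
Proof.
move=> hS; apply/setP=> X; rewrite [X \in Vt _ _ _ _]inE [X \in [set _ in _ | _]]inE setI0 sub0set eqxx /=.
case: (boolP (X \in C)) => //= XC.
have nT : X != T.
  have [e eX] : exists e, e \in zerset X.
    apply/set0Pn; rewrite -card_gt0 (s_card hS XC); exact: s_m hS.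
  apply/negP=> /eqP eXT; move: eX; rewrite eXT zsE.
  by rewrite (negbTE (s_full hS e)).
rewrite /slt /sle nT andbT.
by apply: eq_forallb => f; rewrite in_set0.
Qed.

Theorem lemma2p4 (E : finType) (C : {set svec E}) (r : nat) (T : svec E) :
  is_OM C -> is_rank C r -> 2 <= r -> uniform C r -> is_tope C T ->
  let CT := [set X in C | slt X T] in
  let A := [set zerset X | X in CT] in
  abstract_polytope A (r - 1) /\
  {in CT &, injective (@zerset E)} /\
  (forall X Y, X \in CT -> Y \in CT ->
     cocirc_adj r X Y = abs_adj A (r - 1) (zerset X) (zerset Y)).
Proof.
move=> [C0 Copp cc2 el] [hch _] r2 unif [Tcov Tmax] CT A.
set m := r - 1.
have rm : r = m.+1 by rewrite /m; lia.
have m0 : 0 < m by rewrite /m; lia.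
have hC : forall X, X \in C -> #|zerset X| = m by move=> X XC; rewrite (unif X XC).
have hyp : forall H : {set E}, #|H| = m -> exists2 X, X \in C & zerset X = H.
  move=> H cH; apply: (@hyp_all E m C set0) => //.
  - by move=> X XC; rewrite sub0set cards0 hC.
  - by rewrite -rm.
  - exact: sub0set.
  - by rewrite cards0.
have [Y0 Y0C] : exists2 Y, Y \in C & True.
  case: hch => W [W0 Wc Wl].
  have W1 : W 1 != zerov E by have := Wl 0 (leq_trans (isT : 0 < 2) r2); rewrite W0 => /andP[_]; rewrite eq_sym.
  have [Y YC _] := covec_sub (Wc 1 (leq_trans (isT : 1 <= 2) r2)) W1.
  by exists Y.
have [f0 f0Y] : exists f, f \notin zerset Y0.
  apply/existsP; rewrite -negb_forall; apply/negP=> /forallP h.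
  have eY : Y0 = zerov E by apply/ffunP=> x; rewrite ffunE; apply/eqP; have := h x; rewrite zsE.
  by rewrite -eY Y0C in C0.
have cE : m < #|~: (@set0 E)|.
  rewrite setC0 -(hC _ Y0C).
  apply: proper_card; rewrite properE subsetT /=; apply/negP=> /subsetP/(_ f0 (in_setT f0)).
  by rewrite (negbTE f0Y).
have Tf : forall e, T e != None.
  move=> e; apply/negP=> /eqP Te.
  have [X XC Xe] : exists2 X, X \in C & X e != None.
    case: (boolP (Y0 e == None)) => Y0e; last by exists Y0.
    have f0e : f0 != e by apply/eqP=> ef; move: f0Y; rewrite ef zsE Y0e.
    have cH : #|f0 |: (zerset Y0 :\ e)| = m.
      rewrite cardsU1 in_setD1 (negbTE f0Y) andbF /=.
      have := cardsD1 e (zerset Y0); rewrite zsE Y0e hC //= => ->; by [].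
    have [X XC zX] := hyp _ cH; exists X => //.
    by rewrite -zsE zX in_setU1 in_setD1 eqxx /= orbF eq_sym.
  case: Tcov => s [hs Ts].
  apply: Tmax; exists (foldr (@compv E) X s); split.
    exists (s ++ [:: X]); split; first by rewrite all_cat hs /= XC.
    rewrite foldr_cat /=; congr foldr; apply/ffunP=> g; rewrite !ffunE; by case: (X g).
  rewrite /slt; apply/andP; split.
    apply/forallP=> g; rewrite [foldr (@compv E) X s g]foldr_compv_pt -Ts.
    by case: (T g) => [b|] //=; rewrite eqxx orbT.
  apply/eqP=> eT; have := congr1 (fun V : svec E => V e) eT.
  rewrite /= [foldr (@compv E) X s e]foldr_compv_pt -Ts Te => h; by rewrite -h in Xe.
have hS : setting C m T := Setting Copp el cc2 hC hyp Tf m0.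
have eCT : CT = Vt C T set0 set0 := CT_Vt hS.
have sv : forall X Y, X \in CT -> Y \in CT -> zerset X = zerset Y -> X = Y.
  by move=> X Y; rewrite eCT => XV YV; exact: sameV hS XV YV cE.
have inA : forall X, X \in CT -> zerset X \in A by move=> X XC; apply: imset_f.
have CTC : forall X, X \in CT -> X \in C by move=> X; rewrite inE => /andP[].
have Aof : forall P, P \in A -> exists2 X, X \in CT & P = zerset X by move=> P /imsetP.
have VCT : forall L U, U \in Vt C T set0 L -> U \in CT.
  move=> L U UV; have [UC _ _ hU] := VtP UV; rewrite eCT; apply: VtI => //.
    exact: sub0set.
  exact: setI0.
have pick1 : forall X (S : {set E}), X \in C -> S \subset zerset X -> #|S| = (r - 1).-1 ->
    exists2 x, zerset X = x |: S & x \notin S.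
  move=> X S XC SX cS; have cX := hC _ XC.
  have [x xX xS] : exists2 x, x \in zerset X & x \notin S.
    apply/subsetPn; apply/negP=> sub; have := subset_leq_card sub.
    rewrite cX cS; move: m0; clear; rewrite /m; lia.
  exists x => //; apply/eqP; rewrite eq_sym eqEcard subUset sub1set xX SX cardsU1 xS cX cS /=.
  move: m0; clear; rewrite /m; lia.
split; last split.
- split.
  + by move=> P /Aof [X XC ->]; rewrite hC // CTC.
  + move=> S cS; case: (set_0Vmem [set P in A | S \subset P]) => [->|[P0]].
      by left; rewrite cards0.
    rewrite inE => /andP[/Aof [X0 X0C ->] SX0]; right.
    have [a zX0 aS] := pick1 _ _ (CTC _ X0C) SX0 cS.
    have X0V : X0 \in Vt C T set0 set0 by rewrite -eCT.
    have aX0 : a \in zerset X0 by rewrite zX0 setU11.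
    have [X1 X1V /andP[n10 s10]] := edge hS X0V aX0 (negbT (in_set0 a)) cE.
    have eS : zerset X0 :\ a = S by rewrite zX0 setU1K.
    rewrite eS in s10.
    have X1C : X1 \in CT by rewrite eCT.
    have nz : zerset X1 != zerset X0.
      by apply/eqP=> e; case/eqP: n10; apply: sv.
    have [b zX1 bS] := pick1 _ _ (CTC _ X1C) s10 cS.
    have ab : a != b by apply/eqP=> eab; case/eqP: nz; rewrite zX1 zX0 eab.
    have -> : [set P in A | S \subset P] = [set zerset X0; zerset X1].
      apply/setP=> P; rewrite inE !in_set2; apply/andP/orP.
        case=> /Aof [X2 X2C ->] SX2.
        have X2V : X2 \in Vt C T set0 set0 by rewrite -eCT.
        have X1V' : X1 \in Vt C T set0 set0 by rewrite -eCT.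
        have [c zX2 cS'] := pick1 _ _ (CTC _ X2C) SX2 cS.
        case/orP: (two_max hS X0V X1V' X2V zX0 zX1 zX2 ab aS bS cS') => /eqP ec.
          by left; rewrite zX2 zX0 ec.
        by right; rewrite zX2 zX1 ec.
      case=> /eqP ->; first by rewrite inA.
      by rewrite inA.
    by rewrite cards2 eq_sym nz.
  + move=> P Q /Aof [X XC ->] /Aof [Y YC ->] nPQ.
    set L := zerset X :&: zerset Y.
    have toL : forall U, U \in CT -> L \subset zerset U -> U \in Vt C T set0 L.
      move=> U; rewrite eCT => UV LU; have [UC _ _ hU] := VtP UV.
      by apply: VtI => //; exact: setI0.
    have XV := toL X XC (subsetIl _ _); have YV := toL Y YC (subsetIr _ _).
    have := conn hS (leqnn _) cE XV YV.
    case/connectP=> p pth eY.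
    have pm : forall p X', path (adjV (Vt C T set0 L) m) X' p ->
        path (abs_adj A (r - 1)) (zerset X') (map (@zerset E) p) /\
        all (fun U => U \in Vt C T set0 L) p.
      elim=> [|U p' IHp] X' //= /andP[/and4P[X'V UV nXU cXU] pth'].
      have [h1 h2] := IHp U pth'; rewrite h1 h2 UV !andbT; split=> //.
      rewrite /abs_adj !inA ?(VCT _ _ X'V) ?(VCT _ _ UV) //=.
      apply/andP; split.
        by apply/eqP=> e; case/eqP: nXU; apply: sv; rewrite ?(VCT _ _ X'V) ?(VCT _ _ UV).
      apply/existsP; exists (zerset X' :&: zerset U); by rewrite subsetIl subsetIr cXU.
    have [h1 h2] := pm p X pth.
    exists (map (@zerset E) p); split=> //; first by rewrite last_map -eY.
    rewrite /= subsetIl /=; apply/allP=> Z /mapP [U Up ->].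
    by have [_ LU _ _] := VtP (allP h2 U Up).
- by move=> X Y XC YC; exact: sv.
- move=> X Y XC YC; rewrite /cocirc_adj /abs_adj !inA //=.
  have XV : X \in Vt C T set0 set0 by rewrite -eCT.
  have YV : Y \in Vt C T set0 set0 by rewrite -eCT.
  have [_ _ _ hX] := VtP XV; have [_ _ _ hY] := VtP YV.
  have sep : sepset X Y == set0.
    apply/eqP/setP=> e; rewrite in_set0.
    have [t Te] := notNone (Tf e).
    rewrite !inE.
    case: (hX e (negbT (in_set0 e))) => ->; case: (hY e (negbT (in_set0 e))) => ->;
      rewrite ?Te //=; by case: (t).
  rewrite sep andbT.
  case: (eqVneq X Y) => [->|nXY]; first by rewrite !eqxx.
  have nz : zerset X != zerset Y by apply/eqP=> e; case/eqP: nXY; exact: sv.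
  rewrite nz /=.
  have lt := inter_lt (hC _ (CTC _ XC)) (hC _ (CTC _ YC)) nz.
  apply/idP/existsP.
    move=> h; exists (zerset X :&: zerset Y); rewrite subsetIl subsetIr !andbT; apply/eqP.
    move: h lt m0; clear; rewrite /m; lia.
  case=> S /and3P[/eqP cS SX SY].
  have sub : S \subset zerset X :&: zerset Y by rewrite subsetI SX SY.
  have := subset_leq_card sub; rewrite cS; move: m0; clear; rewrite /m; lia.
Qed.
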